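(* Let $(X_m)_{m\in\mathbb Z}$ and $(Y_m)_{m\in\mathbb Z}$ be homogeneous second order recurrence sequences with constant coefficients that possess the same recurrence relation. For integers $a,b,c,d,e$ put $$\Delta_{xy}=X_{d-a}Y_{e-b}-X_{e-a}Y_{d-b},\quad \Delta_1=X_{d-c}Y_{e-b}-X_{e-c}Y_{d-b},\quad \Delta_2=X_{d-a}X_{e-c}-X_{e-a}X_{d-c},$$ and suppose $\Delta_{xy}\neq0$, $\Delta_1\neq0$, $\Delta_2\neq 0$. Then for all integers $m$ and $k$, $$\sum_{r=0}^k\left(\frac{\Delta_{xy}}{\Delta_1}\right)^r Y_{m-k(a-c)-b+c+(a-c)r}=\frac{\Delta_{xy}}{\Delta_2}\left(\frac{\Delta_{xy}}{\Delta_1}\right)^kX_m-\frac{\Delta_1}{\Delta_2}X_{m-(k+1)(a-c)}.$$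
   Context: A homogeneous second order recurrence sequence with constant coefficients is a sequence $(X_m)_{m\in\mathbb Z}$ of complex numbers for which there are constants $p,q\in\mathbb C$, $q\neq 0$, with $X_m=pX_{m-1}+qX_{m-2}$ for all $m\in\mathbb Z$. Two such sequences possess the same recurrence relation if they satisfy it with the same constants $p,q$. Summation convention: for an integer $k<0$, $\sum_{r=0}^k f_r$ means $-\sum_{r=k+1}^{-1} f_r$ (in particular it equals $0$ when $k=-1$). *)

(* Defs.v *)
(* the complex numbers are represented by an arbitrary
   numClosedFieldType C (algebraically closed field with conjugation/order). *)
From HB Require Import structures.
From mathcomp Require Import all_boot all_order all_algebra all_field.
Set Implicit Arguments. Unset Strict Implicit. Unset Printing Implicit Defensive.
Import Order.TTheory GRing.Theory Num.Theory.
Local Open Scope ring_scope.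

Definition is_rec2 (C : numClosedFieldType) (p q : C) (X : int -> C) : Prop :=
  q != 0 /\ forall m : int, X m = p * X (m - 1) + q * X (m - 2).

(* Generalized sum  sum_{r=0}^k f r  for k : int:
   k >= 0 : f 0 + ... + f k ;  k < 0 : - sum_{r=k+1}^{-1} f r. *)
Definition zsum (C : numClosedFieldType) (k : int) (f : int -> C) : C :=
  match k with
  | Posz n => \sum_(i < n.+1) f (Posz i)
  | Negz n => - \sum_(i < n) f (- (Posz i.+1))
  end.

(* Main.v *)
Require Import Defs.
From HB Require Import structures.
From mathcomp Require Import all_boot all_order all_algebra all_field.
From mathcomp Require Import ring.
Import Order.TTheory GRing.Theory Num.Theory.
Local Open Scope ring_scope.

Definition isrec {C : numClosedFieldType} (p q : C) (W : int -> C) :=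
  forall m : int, W m = p * W (m - 1) + q * W (m - 2).

Lemma PoszS (n : nat) : (n.+1)%:Z = n%:Z + 1.
Proof. by rewrite -addn1 PoszD. Qed.

Lemma isrec_lin {C : numClosedFieldType} (p q : C) (A B Z : int -> C) (x y z : C) :
  isrec p q A -> isrec p q B -> isrec p q Z ->
  isrec p q (fun n => x * A n + y * B n + z * Z n).
Proof. move=> hA hB hZ m; rewrite hA hB hZ; ring. Qed.

Lemma isrec_shift {C : numClosedFieldType} (p q : C) (A : int -> C) (s : int) :
  isrec p q A -> isrec p q (fun n => A (n + s)).
Proof.
move=> hA m; rewrite hA.
have -> : m + s - 1 = m - 1 + s by ring.
by have -> : m + s - 2 = m - 2 + s by ring.
Qed.

Lemma zero2 {C : numClosedFieldType} (p q : C) (W : int -> C) (k : int) :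
  q != 0 -> isrec p q W -> W k = 0 -> W (k + 1) = 0 -> forall n, W n = 0.
Proof.
move=> hq hW h0 h1.
have fw : forall j : nat, W (k + j) = 0 /\ W (k + j + 1) = 0.
  elim=> [|j [IH1 IH2]]; first by rewrite addr0.
  split; first by rewrite -IH2; congr W; rewrite PoszS; ring.
  rewrite hW.
  have -> : k + j.+1%:Z + 1 - 1 = k + j + 1 by rewrite PoszS; ring.
  have -> : k + j.+1%:Z + 1 - 2 = k + j by rewrite PoszS; ring.
  by rewrite IH1 IH2; ring.
have bw : forall j : nat, W (k - j%:Z) = 0 /\ W (k - j%:Z + 1) = 0.
  elim=> [|j [IH1 IH2]]; first by rewrite subr0.
  split; last by rewrite -IH1; congr W; rewrite PoszS; ring.
  have := hW (k - j%:Z + 1).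
  have -> : k - j%:Z + 1 - 1 = k - j%:Z by ring.
  have -> : k - j%:Z + 1 - 2 = k - j.+1%:Z by rewrite PoszS; ring.
  rewrite IH1 IH2 mulr0 add0r => /esym/eqP; rewrite mulf_eq0 (negbTE hq) /=.
  by move/eqP.
move=> n; have -> : n = k + (n - k) by ring.
case: (n - k) => j; first by case: (fw j).
rewrite NegzE.
by case: (bw j.+1); rewrite -[_ + - _]/(k - _).
Qed.

Lemma detlem {C : numClosedFieldType} (p q : C) (A B Z : int -> C) :
  q != 0 -> isrec p q A -> isrec p q B -> isrec p q Z ->
  forall n s t : int,
  Z n * (A s * B t - A t * B s) = A n * (Z s * B t - Z t * B s)
      + B n * (A s * Z t - A t * Z s).
Proof.
move=> hq hA hB hZ.
have H1 : forall n s : int,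
  Z n * (A s * B (s+1) - A (s+1) * B s) = A n * (Z s * B (s+1) - Z (s+1) * B s)
      + B n * (A s * Z (s+1) - A (s+1) * Z s).
  move=> n s; apply/eqP; rewrite -subr_eq0; apply/eqP; move: n.
  apply: (@zero2 C p q _ s hq).
  - move=> m /=; rewrite [A m]hA [B m]hB [Z m]hZ; ring.
  - ring.
  - ring.
move=> n s t; apply/eqP; rewrite -subr_eq0; apply/eqP; move: t.
apply: (@zero2 C p q _ s hq).
- move=> m /=; rewrite [A m]hA [B m]hB [Z m]hZ; ring.
- ring.
- by apply/eqP; rewrite subr_eq0; apply/eqP; rewrite H1.
Qed.

Lemma zsum_ext {C : numClosedFieldType} (k : int) (f g : int -> C) :
  (forall r, f r = g r) -> zsum k f = zsum k g.
Proof.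
by move=> h; case: k => n /=; [|congr (- _)]; apply: eq_bigr => i _; rewrite h.
Qed.

Lemma zsum_tele {C : numClosedFieldType} (k : int) (g : int -> C) :
  zsum k (fun r => g (r + 1) - g r) = g (k + 1) - g 0.
Proof.
case: k => n /=.
  elim: n => [|n IH]; first by rewrite big_ord1.
  rewrite big_ord_recr /= IH.
  have -> : Posz n.+1 = n%:Z + 1 by rewrite PoszS.
  ring.
have -> : Negz n + 1 = - n%:Z by rewrite NegzE; ring.
elim: n => [|n IH]; first by rewrite big_ord0; ring.
rewrite big_ord_recr /= opprD IH.
have -> : - (Posz n.+1) + 1 = - n%:Z by rewrite PoszS; ring.
ring.
Qed.

Lemma lin_trans {C : numClosedFieldType} (x y : C) : x = y ->
  forall z w : C, z - w = -(x - y) -> z = w.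
Proof. by move=> -> z w; rewrite subrr oppr0 => /eqP; rewrite subr_eq0 => /eqP. Qed.

Theorem lemma4 (C : numClosedFieldType) (p q : C) (X Y : int -> C)
  (hX : is_rec2 p q X) (hY : is_rec2 p q Y) (a b c d e : int) :
  let Dxy := X (d - a) * Y (e - b) - X (e - a) * Y (d - b) in
  let D1 := X (d - c) * Y (e - b) - X (e - c) * Y (d - b) in
  let D2 := X (d - a) * X (e - c) - X (e - a) * X (d - c) in
  Dxy != 0 -> D1 != 0 -> D2 != 0 ->
  forall m k : int,
    zsum k (fun r => (Dxy / D1) ^ r * Y (m - k * (a - c) - b + c + (a - c) * r))
    = Dxy / D2 * (Dxy / D1) ^ k * X m - D1 / D2 * X (m - (k + 1) * (a - c)).
Proof.
case: hX => hq hXr; case: hY => _ hYr.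
move=> Dxy D1 D2 nxy n1 n2 m k.
have base : forall n, Y (n + (c - b)) = Dxy / D2 * X n - D1 / D2 * X (n + (c - a)).
  move=> n.
  have h := @detlem _ p q X (fun n => X (n + (c - a))) (fun n => Y (n + (c - b))) hq hXr
    (@isrec_shift _ p q X (c - a) hXr) (@isrec_shift _ p q Y (c - b) hYr) n (d - c) (e - c).
  move: h => /=.
  rewrite (_ : d - c + (c - a) = d - a); last by ring.
  rewrite (_ : e - c + (c - a) = e - a); last by ring.
  rewrite (_ : d - c + (c - b) = d - b); last by ring.
  rewrite (_ : e - c + (c - b) = e - b); last by ring.
  move=> h.
  have e1 : D2 * Y (n + (c - b)) = Dxy * X n - D1 * X (n + (c - a)).
    move: h; rewrite /D2 /Dxy /D1 => h; eapply lin_trans; [exact: h | ring].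
  apply: (mulfI n2); rewrite e1; field; exact: n2.
set t := Dxy / D1.
have tn0 : t != 0 by rewrite /t mulf_neq0 // invr_eq0.
pose h r := D1 / D2 * t ^ r * X (m - k * (a - c) + (a - c) * (r - 1)).
rewrite (@zsum_ext _ k _ (fun r => h (r + 1) - h r)); last first.
  move=> r; rewrite /h.
  rewrite (_ : m - k * (a - c) - b + c + (a - c) * r
      = (m - k * (a - c) + (a - c) * r) + (c - b)); last by ring.
  rewrite base expfzDr // expr1z.
  rewrite (_ : m - k * (a - c) + (a - c) * (r + 1 - 1) = m - k * (a - c) + (a - c) * r); last by ring.
  rewrite (_ : m - k * (a - c) + (a - c) * (r - 1)
      = m - k * (a - c) + (a - c) * r + (c - a)); last by ring.
  rewrite /t; field; apply/andP; split => //.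
rewrite zsum_tele /h expfzDr // expr1z expr0z.
rewrite (_ : m - k * (a - c) + (a - c) * (k + 1 - 1) = m); last by ring.
rewrite (_ : m - k * (a - c) + (a - c) * (0 - 1) = m - (k + 1) * (a - c)); last by ring.
rewrite /t; field; apply/andP; split => //.
Qed.
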